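(* Let $d$ be a positive integer and $H$ a complex Hilbert space. Let $T=(T_1,\ldots,T_d)$ be a commuting operator-valued multishift on $\ell^2_H(\mathbb N^d)$ with unitary operator weights $\{A^{(j)}_\alpha:\alpha\in\mathbb N^d,\ j=1,\ldots,d\}$. Then $T$ satisfies the von Neumann's inequality, i.e. $\|p(T)\|\le\sup_{z\in\mathbb D^d}|p(z)|$ for every polynomial $p\in\mathbb C[z_1,\ldots,z_d]$.
   Context: $\mathbb N$ denotes the nonnegative integers; $\varepsilon_j\in\mathbb N^d$ has $1$ in the $j$-th place and $0$ elsewhere; $\mathbb D^d$ is the open unit polydisc. $\ell^2_H(\mathbb N^d)=\bigoplus_{\alpha\in\mathbb N^d}H$. Given bounded operators $A^{(j)}_\alpha:H\to H$, the operator-valued multishift with these operator weights is the $d$-tuple defined by $T_j(\oplus_\alpha x_\alpha)=\oplus_\alpha A^{(j)}_{\alpha-\varepsilon_j}x_{\alpha-\varepsilon_j}$ (the term being $0$ when $\alpha_j=0$). It is a commuting operator-valued multishift if $\sup_\alpha\|A^{(j)}_\alpha\|<\infty$ for each $j$ and $A^{(i)}_{\alpha+\varepsilon_j}A^{(j)}_\alpha=A^{(j)}_{\alpha+\varepsilon_i}A^{(i)}_\alpha$ for all $\alpha$ and all $i,j$. For $p(z)=\sum a_\alpha z^\alpha$, $p(T)=\sum a_\alpha T_1^{\alpha_1}\cdots T_d^{\alpha_d}$. *)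

(* Defs.v *)
From HB Require Import structures.
From mathcomp Require Import all_boot all_order all_algebra.
From mathcomp Require Import mpoly.
From mathcomp Require Import all_classical all_reals all_analysis.
From mathcomp Require Import complex.

Set Implicit Arguments.
Unset Strict Implicit.
Unset Printing Implicit Defensive.

Import Order.TTheory GRing.Theory Num.Theory.
Local Open Scope ring_scope.
Local Open Scope classical_set_scope.

Definition cabs (R : realType) (z : R[i]) : R := Normc.normc z.

Section Hilbert.
Variables (R : realType) (H : lmodType R[i]) (ip : H -> H -> R[i]).

Definition hnorm2 (x : H) : R := complex.Re (ip x x).

Definition inner_product : Prop :=
  [/\ (forall (a : R[i]) (x y z : H), ip (a *: x + y) z = a * ip x z + ip y z),
      (forall x y : H, ip x y = (ip y x)^*),
      (forall x : H, 0 <= ip x x) &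
      (forall x : H, ip x x = 0 -> x = 0)].

Definition complete_ip : Prop :=
  forall u : nat -> H,
    (forall e : R, 0 < e -> exists N : nat, forall m n : nat,
        (N <= m)%N -> (N <= n)%N -> hnorm2 (u m - u n) < e) ->
    exists l : H, forall e : R, 0 < e -> exists N : nat, forall n : nat,
        (N <= n)%N -> hnorm2 (u n - l) < e.

Definition hilbert_space : Prop := inner_product /\ complete_ip.

Definition unitary (U : H -> H) : Prop :=
  [/\ (forall (a : R[i]) (x y : H), U (a *: x + y) = a *: U x + U y),
      (exists M : R, forall x : H, hnorm2 (U x) <= M * hnorm2 x) &
      (exists V : H -> H, [/\ (forall x y : H, ip (U x) y = ip x (V y)),
                             cancel U V & cancel V U])].

(* Multi-indices in N^d are multinomials 'X_{1..d}; eps_j = mnm1 j. *)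
Variable d : nat.
Local Notation mi := (mpoly.multinom d).

Definition commuting_multishift (A : 'I_d -> mi -> H -> H) : Prop :=
  (forall j : 'I_d, exists M : R, forall (a : mi) (x : H),
      hnorm2 (A j a x) <= M * hnorm2 x) /\
  (forall (i j : 'I_d) (a : mi) (x : H),
      A i (mpoly.mnm_add a (mpoly.mnm1 j)) (A j a x) =
      A j (mpoly.mnm_add a (mpoly.mnm1 i)) (A i a x)).

Variable A : 'I_d -> mi -> H -> H.

Definition mshift (j : 'I_d) (x : mi -> H) : mi -> H :=
  fun a => if (mpoly.fun_of_multinom a j == 0)%N then 0
           else A j (mpoly.mnm_sub a (mpoly.mnm1 j))
                    (x (mpoly.mnm_sub a (mpoly.mnm1 j))).

Definition mshift_pow (m : mi) (x : mi -> H) : mi -> H :=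
  foldr (fun j y => iter (mpoly.fun_of_multinom m j) (mshift j) y) x (enum 'I_d).

Definition poly_shift (p : mpoly.mpoly d R[i]) (x : mi -> H) : mi -> H :=
  fun a => \sum_(m <- mpoly.msupp p) mpoly.mcoeff m p *: mshift_pow m x a.

Definition l2norm2 (x : mi -> H) : \bar R :=
  esum (@setT mi) (fun a => (hnorm2 (x a))%:E).

Definition polydisc_sup (p : mpoly.mpoly d R[i]) : \bar R :=
  ereal_sup [set (cabs (mpoly.meval z p))%:E |
             z in [set z : 'I_d -> R[i] | forall j, cabs (z j) < 1]].

(* von Neumann's inequality ||p(T)|| <= sup_{D^d} |p|, with the operator  *)
(* norm unfolded: ||p(T) x||^2 <= (sup |p|)^2 ||x||^2 for x in l^2_H.     *)
Definition von_neumann_ineq : Prop :=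
  forall (p : mpoly.mpoly d R[i]) (x : mi -> H),
    (l2norm2 x < +oo)%E ->
    (l2norm2 (poly_shift p x) <= polydisc_sup p * polydisc_sup p * l2norm2 x)%E.

End Hilbert.

(* Main.v *)
Require Import Defs.
From HB Require Import structures.
From mathcomp Require Import all_boot all_order all_algebra.
From mathcomp Require Import mpoly.
From mathcomp Require Import all_classical all_reals all_analysis.
From mathcomp Require Import complex.
From mathcomp Require Import zify ring lra.
From mathcomp Require Import cyclic separable cyclotomic.
Import Order.TTheory GRing.Theory Num.Theory.
Local Open Scope complex_scope.
Local Open Scope ring_scope.

Section HilbertFacts.
Variables (R : realType) (H : lmodType R[i]) (ip : H -> H -> R[i]).
Hypothesis ipP : inner_product ip.

Lemma ipDZl a x y z : ip (a *: x + y) z = a * ip x z + ip y z.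
Proof. by case: ipP. Qed.

Lemma ipC x y : ip x y = (ip y x)^*.
Proof. by case: ipP. Qed.

Lemma ip_ge0 x : 0 <= ip x x.
Proof. by case: ipP. Qed.

Lemma ip0l z : ip 0 z = 0.
Proof.
have := ipDZl (-1) 0 0 z; rewrite scaleN1r oppr0 addr0 mulN1r addNr.
by [].
Qed.

Lemma ipZl a x z : ip (a *: x) z = a * ip x z.
Proof. by rewrite -[a *: x]addr0 ipDZl ip0l addr0. Qed.

Lemma ipDl x y z : ip (x + y) z = ip x z + ip y z.
Proof. by rewrite -[x]scale1r ipDZl mul1r scale1r. Qed.

Lemma ip_suml I (s : seq I) (F : I -> H) z :
  ip (\sum_(i <- s) F i) z = \sum_(i <- s) ip (F i) z.
Proof.
elim: s => [|a s IH]; first by rewrite !big_nil ip0l.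
by rewrite !big_cons ipDl IH.
Qed.

Lemma ip0r z : ip z 0 = 0.
Proof. by rewrite ipC ip0l rmorph0. Qed.

Lemma ipZr a x z : ip z (a *: x) = a^* * ip z x.
Proof. by rewrite ipC ipZl rmorphM /= -ipC. Qed.

Lemma ip_sumr I (s : seq I) (F : I -> H) z :
  ip z (\sum_(i <- s) F i) = \sum_(i <- s) ip z (F i).
Proof.
rewrite ipC ip_suml rmorph_sum /=; apply: eq_bigr => i _; by rewrite -ipC.
Qed.

Lemma ip_real x : ip x x = (hnorm2 ip x)%:C.
Proof.
rewrite /hnorm2; have := ip_ge0 x; case: (ip x x) => a b.
by rewrite lecE /= => /andP[/eqP -> _].
Qed.

Lemma hnorm2_ge0 x : 0 <= hnorm2 ip x.
Proof. by rewrite -lecR -ip_real ip_ge0. Qed.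

Lemma hnorm20 : hnorm2 ip 0 = 0.
Proof. by rewrite /hnorm2 ip0l. Qed.

Lemma normc_cabs (c : R[i]) : `|c| = (cabs c)%:C.
Proof. by rewrite normc_def; case: c. Qed.

Lemma cabs_ge0 (c : R[i]) : 0 <= cabs c.
Proof. by rewrite -lecR -normc_cabs normr_ge0. Qed.

Lemma hnorm2Z c x : hnorm2 ip (c *: x) = cabs c ^+ 2 * hnorm2 ip x.
Proof.
apply: complexI; rewrite -ip_real ipZl ipZr mulrA -sqr_normc normc_cabs.
by rewrite ip_real rmorphM rmorphXn.
Qed.

End HilbertFacts.

Set Implicit Arguments.
Unset Strict Implicit.
Unset Printing Implicit Defensive.

Section Untwist.
Variables (R : realType) (H : lmodType R[i]) (ip : H -> H -> R[i]) (d : nat)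
  (A : 'I_d -> 'X_{1..d} -> H -> H).
Hypothesis ipP : inner_product ip.
Implicit Types (a : 'X_{1..d}) (j k : 'I_d).
Hypothesis Acomm : forall (i j : 'I_d) (a : 'X_{1..d}) (x : H),
      A i (mnm_add a (mnm1 j)) (A j a x) = A j (mnm_add a (mnm1 i)) (A i a x).
Hypothesis Aun : forall j a, unitary ip (A j a).

Lemma A_lin j a c x y : A j a (c *: x + y) = c *: A j a x + A j a y.
Proof. by case: (Aun j a). Qed.

Lemma A_ip j a x : ip (A j a x) (A j a x) = ip x x.
Proof. by case: (Aun j a) => _ _ [V [h1 h2 h3]]; rewrite h1 h2. Qed.

Lemma A_surj j a v : exists w, A j a w = v.
Proof. by case: (Aun j a) => _ _ [V [h1 h2 h3]]; exists (V v). Qed.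

Fixpoint Bf (n : nat) (a : 'X_{1..d}) : H -> H :=
  if n is n'.+1 then
    if [pick j | (0 < a j)%N] is Some j then
      fun v => A j (a - U_(j))%MM (Bf n' (a - U_(j))%MM v)
    else id
  else id.

Definition B a := Bf (mdeg a) a.

Lemma subUK a k : (0 < a k)%N -> (a - U_(k) + U_(k))%MM = a.
Proof. by move=> h; rewrite submK // lep1mP -lt0n. Qed.

Lemma mdeg_subU a k : (0 < a k)%N -> mdeg a = (mdeg (a - U_(k))%MM).+1.
Proof. by move=> h; rewrite -{1}(subUK h) mdegD mdeg1 addn1. Qed.

Lemma B0 v : B 0%MM v = v.
Proof. by rewrite /B mdeg0. Qed.

Lemma B_unfold a j : (0 < a j)%N ->
  exists k, (0 < a k)%N /\ forall v, B a v = A k (a - U_(k))%MM (B (a - U_(k))%MM v).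
Proof.
move=> hj; rewrite /B (mdeg_subU hj) /=.
case: pickP => [k hk|/(_ j)]; last by rewrite hj.
exists k; split => // v.
by have := mdeg_subU hk; rewrite (mdeg_subU hj) => -[->].
Qed.

Lemma Bstep a j v : B (a + U_(j))%MM v = A j a (B a v).
Proof.
move: {2}(mdeg a) (erefl (mdeg a)) => n; elim/ltn_ind: n a j v => n IH a j v Ea.
have hb : (0 < (a + U_(j))%MM j)%N by rewrite mnmDE mnm1E eqxx addn1.
have [k [hk ->]] := B_unfold hb.
have [/eqP ekj|nkj] := boolP (k == j).
  by subst k; rewrite addmK.
have hak : (0 < a k)%N by move: hk; rewrite mnmDE mnm1E eq_sym (negbTE nkj) addn0.
set a' := (a - U_(k))%MM.
have Ea' : a = (a' + U_(k))%MM by rewrite subUK.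
have lt : (mdeg a' < n)%N by rewrite -Ea (mdeg_subU hak).
have -> : ((a + U_(j)) - U_(k))%MM = (a' + U_(j))%MM.
  apply/mnmP => i; rewrite /a' !mnmE; case: (k =P i) => [<-|_].
    by rewrite eq_sym (negbTE nkj) !addn0.
  by rewrite !subn0.
rewrite (IH _ lt a' j v erefl).
rewrite Acomm.
by rewrite -(IH _ lt a' k v erefl) -Ea'.
Qed.

Lemma B_prop n : forall a, mdeg a = n ->
  [/\ forall c x y, B a (c *: x + y) = c *: B a x + B a y,
      forall x, ip (B a x) (B a x) = ip x x &
      forall v, exists w, B a w = v].
Proof.
elim: n => [|n IH] a Ea.
  have -> : a = 0%MM by apply/eqP; rewrite -mdeg_eq0 Ea.
  by split => [c x y|x|v]; rewrite ?B0 //; exists v; rewrite B0.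
case: (pickP (fun k => 0 < a k)%N) => [k hk|h0]; last first.
  suff : mdeg a = 0%N by rewrite Ea.
  by rewrite mdegE big1 // => i _; move: (h0 i); case: (a i).
set a' := (a - U_(k))%MM.
have eB : forall x, B a x = A k a' (B a' x) by move=> x; rewrite -{1}(subUK hk) Bstep.
have := Ea; rewrite (mdeg_subU hk) => -[] /IH [h1' h2' h3'].
split => [c x y|x|v]; rewrite ?eB; rename h1' into h1; rename h2' into h2; rename h3' into h3.
- by rewrite h1 A_lin.
- by rewrite A_ip h2.
- have [w1 hw1] := A_surj k a' v; have [w2 hw2] := h3 w1.
  by exists w2; rewrite eB hw2.
Qed.

End Untwist.

Section Shifts.
Variables (R : realType) (H : lmodType R[i]) (d : nat).
Implicit Types (a c m : 'X_{1..d}) (j k : 'I_d) (y : 'X_{1..d} -> H).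

Definition Aid : 'I_d -> 'X_{1..d} -> H -> H := fun _ _ v => v.
Definition Sh c y : 'X_{1..d} -> H :=
  fun a => if (c <= a)%MM then y (a - c)%MM else 0.

Lemma mshift_Sh j c y : mshift Aid j (Sh c y) = Sh (c + U_(j))%MM y.
Proof.
apply: funext => a; rewrite /mshift /Sh /Aid.
case: eqP => [h|/eqP h].
  case: ifP => // /mnm_lepP /(_ j); rewrite mnmDE mnm1E eqxx h; lia.
have -> : (c <= a - U_(j))%MM = (c + U_(j) <= a)%MM.
  apply/mnm_lepP/mnm_lepP => hh i; move: (hh i); rewrite !mnmE;
  case: (j =P i) => [<-|] /=; lia.
by rewrite submDA addmC.
Qed.

Lemma iter_Sh j n c y : iter n (mshift Aid j) (Sh c y) = Sh (c + U_(j) *+ n)%MM y.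
Proof.
elim: n => [|n IH]; first by rewrite /= mulm0n addm0.
by rewrite iterS IH mshift_Sh mulmSr addmA.
Qed.

Lemma foldr_Sh m s c y :
  foldr (fun j z => iter (m j) (mshift Aid j) z) (Sh c y) s =
  Sh (c + \big[mnm_add/0%MM]_(j <- s) (U_(j) *+ m j))%MM y.
Proof.
elim: s => [|j s IH]; first by rewrite big_nil addm0.
by rewrite /= IH iter_Sh big_cons -addmA [(_ + U_(j) *+ _)%MM]addmC.
Qed.

Lemma bigmnmE (s : seq 'I_d) (F : 'I_d -> 'X_{1..d}) i :
  (\big[mnm_add/0%MM]_(j <- s) F j) i = (\sum_(j <- s) F j i)%N.
Proof.
elim: s => [|j s IH]; first by rewrite !big_nil mnmE.
by rewrite !big_cons mnmDE IH.
Qed.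

Lemma sumU m : \big[mnm_add/0%MM]_(j <- enum 'I_d) (U_(j) *+ m j)%MM = m.
Proof.
apply/mnmP => i; rewrite bigmnmE big_enum /=.
rewrite (bigD1 i) //= mulmnE mnm1E eqxx mul1n big1 ?addn0 // => j /negbTE.
by rewrite mulmnE mnm1E => ->.
Qed.

Lemma Sh0 y : Sh 0%MM y = y.
Proof.
apply: funext => a; rewrite /Sh subm0; case: ifP => // /negP; case.
by apply/mnm_lepP => i; rewrite mnmE.
Qed.

Lemma mshift_pow_Sh m y : mshift_pow Aid m y = Sh m y.
Proof. by rewrite /mshift_pow -{1}(Sh0 y) foldr_Sh sumU add0m. Qed.

Lemma poly_shift_Sh p y a :
  poly_shift Aid p y a = \sum_(m <- msupp p) p@_m *: Sh m y a.
Proof. by rewrite /poly_shift; apply: eq_bigr => m _; rewrite mshift_pow_Sh. Qed.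

Variables (A : 'I_d -> 'X_{1..d} -> H -> H) (Bm : 'X_{1..d} -> H -> H).
Hypothesis Bstep : forall a j v, Bm (a + U_(j))%MM v = A j a (Bm a v).
Hypothesis Blin : forall a (c : R[i]) x x', Bm a (c *: x + x') = c *: Bm a x + Bm a x'.

Definition W y : 'X_{1..d} -> H := fun a => Bm a (y a).

Lemma Bm0 a : Bm a 0 = 0.
Proof.
have := Blin a (-1) 0 0; rewrite scaleN1r oppr0 addr0 scaleN1r addNr.
by [].
Qed.

Lemma Bm_sum a (I : Type) (s : seq I) (c : I -> R[i]) (v : I -> H) :
  Bm a (\sum_(i <- s) c i *: v i) = \sum_(i <- s) c i *: Bm a (v i).
Proof.
elim: s => [|i s IH]; first by rewrite !big_nil Bm0.
by rewrite !big_cons Blin IH.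
Qed.

Lemma mshift_W j y : mshift A j (W y) = W (mshift Aid j y).
Proof.
apply: funext => a; rewrite /mshift /W /Aid; case: eqP => h; first by rewrite Bm0.
have ha : (0 < a j)%N by rewrite lt0n; apply/eqP.
by rewrite -Bstep subUK.
Qed.

Lemma mshift_pow_W m y : mshift_pow A m (W y) = W (mshift_pow Aid m y).
Proof.
rewrite /mshift_pow; elim: (enum 'I_d) => //= j s ->.
by elim: (m j) => //= n ->; rewrite mshift_W.
Qed.

Lemma poly_shift_W p y : poly_shift A p (W y) = W (poly_shift Aid p y).
Proof.
apply: funext => a; rewrite /poly_shift {2}/W Bm_sum.
by apply: eq_bigr => m _; rewrite mshift_pow_W.
Qed.

End Shifts.

Lemma sum_reindex (V : nmodType) (I J : eqType) (s : seq I) (t : seq J)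
    (h : J -> I) (F : I -> V) :
  uniq s -> uniq t -> injective h -> {subset map h t <= s} ->
  (forall a, a \in s -> a \notin map h t -> F a = 0) ->
  \sum_(a <- s) F a = \sum_(b <- t) F (h b).
Proof.
move=> us ut ih sub z.
transitivity (\sum_(a <- map h t) F a); last by rewrite big_map.
rewrite [LHS](bigID (mem (map h t))) /= [X in _ + X]big_seq_cond.
rewrite [X in _ + X]big1 ?addr0; last by move=> a /andP[ain na]; exact: z.
rewrite -big_filter; apply: perm_big; apply: uniq_perm.
- exact: filter_uniq.
- by rewrite map_inj_uniq.
- by move=> a; rewrite mem_filter; case: (boolP (a \in map h t)) => //= /sub ->.
Qed.

Lemma sum_sub_le (R : realDomainType) (I : eqType) (s t : seq I) (F : I -> R) :
  uniq s -> uniq t -> {subset s <= t} -> (forall a, 0 <= F a) ->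
  \sum_(a <- s) F a <= \sum_(a <- t) F a.
Proof.
move=> us ut sub F0.
rewrite [X in _ <= X](bigID (mem s)) /= -[X in X <= _]addr0 lerD //; last first.
  by rewrite sumr_ge0.
rewrite le_eqVlt; apply/orP; left; apply/eqP; rewrite -[RHS]big_filter; apply: perm_big.
apply: uniq_perm => //; first exact: filter_uniq.
by move=> a; rewrite mem_filter; case: (boolP (a \in s)) => //= /sub ->.
Qed.

Section Boxes.
Variable d : nat.

Definition toM (M : nat) (k : {ffun 'I_d -> 'I_M}) : 'X_{1..d} :=
  [multinom (k i : nat) | i < d].
Definition bs (M : nat) : seq 'X_{1..d} :=
  [seq toM k | k <- enum {: {ffun 'I_d -> 'I_M}}].

Lemma toM_inj M : injective (@toM M).
Proof.
move=> k k' /mnmP h; apply/ffunP => i; apply/val_inj; move: (h i).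
by rewrite !mnmE.
Qed.

Lemma bs_uniq M : uniq (bs M).
Proof. by rewrite map_inj_uniq ?enum_uniq //; exact: toM_inj. Qed.

Lemma mem_bs M (a : 'X_{1..d}) : (a \in bs M) = [forall i, (a i < M)%N].
Proof.
apply/idP/idP.
  by case/mapP => k _ ->; apply/forallP => i; rewrite mnmE ltn_ord.
move/forallP => h; apply/mapP; exists [ffun i => Ordinal (h i)].
  by rewrite mem_enum.
by apply/mnmP => i; rewrite mnmE ffunE.
Qed.

Lemma mem_bsP M (a : 'X_{1..d}) : reflect (forall i, (a i < M)%N) (a \in bs M).
Proof. by rewrite mem_bs; apply: forallP. Qed.

End Boxes.

Section Parseval.
Variables (R : realType) (H : lmodType R[i]) (ip : H -> H -> R[i]).
Hypothesis ipP : inner_product ip.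

Lemma ip_sum2 (I : Type) (s : seq I) (c : I -> R[i]) (v : I -> H) :
  ip (\sum_(a <- s) c a *: v a) (\sum_(a <- s) c a *: v a) =
  \sum_(a <- s) \sum_(b <- s) (c a * (c b)^*) * ip (v a) (v b).
Proof.
rewrite ip_suml //; apply: eq_bigr => a _; rewrite ipZl // ip_sumr // mulr_sumr.
by apply: eq_bigr => b _; rewrite ipZr // mulrA.
Qed.

Lemma parseval (T : finType) (I : eqType) (s : seq I) (c : T -> I -> R[i])
    (w : I -> R[i]) (v : I -> H) :
  uniq s ->
  (forall a b, a \in s -> b \in s ->
     \sum_t c t a * (c t b)^* = if a == b then w a else 0) ->
  \sum_t ip (\sum_(a <- s) c t a *: v a) (\sum_(a <- s) c t a *: v a) =
  \sum_(a <- s) w a * ip (v a) (v a).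
Proof.
move=> us orth.
under eq_bigr do rewrite ip_sum2.
rewrite exchange_big /= big_seq [RHS]big_seq; apply: eq_bigr => a ha.
rewrite exchange_big /= big_seq.
rewrite (eq_bigr (fun b => (if a == b then w a else 0) * ip (v a) (v b))); last first.
  by move=> b hb; rewrite -mulr_suml orth.
rewrite -big_seq (bigD1_seq a) //= eqxx big1 ?addr0 // => b /negbTE.
by rewrite eq_sym => ->; rewrite mul0r.
Qed.

End Parseval.

Lemma Nconj_real (R : realType) (r : R) : Num.conj (r%:C : R[i]) = r%:C.
Proof. exact: conjc_real. Qed.

Section Grid.
Variables (R : realType) (d : nat).

Definition zpow (z : 'I_d -> R[i]) (a : 'X_{1..d}) : R[i] := \prod_(i < d) z i ^+ a i.

Lemma zpowD z a b : zpow z (a + b)%MM = zpow z a * zpow z b.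
Proof. by rewrite /zpow -big_split; apply: eq_bigr => i _; rewrite mnmDE exprD. Qed.

Variables (M : nat) (zeta : R[i]).
Hypothesis prim : M.-primitive_root zeta.

Lemma M_gt0 : (0 < M)%N.
Proof. exact: prim_order_gt0 prim. Qed.

Lemma norm_zeta : `|zeta| = 1.
Proof.
have := prim_expr_order prim => /(congr1 (fun x => `|x|)).
rewrite normrX normr1 => /eqP; rewrite pexpr_eq1 ?M_gt0 //; by move/eqP.
Qed.

Lemma conj_zeta : zeta^* = zeta ^+ M.-1.
Proof.
have h1 : zeta * zeta^* = 1 by rewrite -sqr_normc norm_zeta expr1n.
rewrite -[LHS]mul1r -(prim_expr_order prim) -(prednK M_gt0) exprS.
by rewrite mulrAC h1 mul1r.
Qed.

Lemma conj_zetaX k : (zeta ^+ k)^* = zeta ^+ (M.-1 * k).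
Proof. by rewrite rmorphXn /= conj_zeta -exprM. Qed.

Lemma dvd_diag x y : (x < M)%N -> (y < M)%N -> (M %| x + M.-1 * y)%N = (x == y).
Proof.
move=> hx hy; have M0 := M_gt0.
have E : (x + M.-1 * y + y = x + y * M)%N.
  by rewrite -addnA -{2}[y]mul1n -mulnDl addn1 prednK // mulnC.
apply/idP/idP => [/dvdnP [q hq]|/eqP <-]; last first.
  by rewrite -{1}[x]mul1n -mulnDl add1n prednK // dvdn_mulr.
have : ((x + M.-1 * y + y) %% M = (x + y * M) %% M)%N by rewrite E.
rewrite hq modnMDl addnC modnMDl !modn_small //.
by move=> ->.
Qed.

Lemma geo e : \sum_(k < M) (zeta ^+ e) ^+ k = if (M %| e)%N then M%:R else 0.
Proof.
rewrite (prim_order_dvd prim); case: eqP => [->|/eqP ne1].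
  by under eq_bigr do rewrite expr1n; rewrite sumr_const card_ord.
have : (zeta ^+ e - 1) * \sum_(k < M) (zeta ^+ e) ^+ k = 0.
  by rewrite -subrX1 -exprM mulnC exprM (prim_expr_order prim) expr1n subrr.
by move/eqP; rewrite mulf_eq0 subr_eq0 (negbTE ne1) => /eqP.
Qed.

Lemma orth1 (r : R) x y : (x < M)%N -> (y < M)%N ->
  \sum_(k < M) (r%:C * zeta ^+ k) ^+ x * ((r%:C * zeta ^+ k) ^+ y)^* =
  if x == y then (M%:R * r ^+ (2 * x))%:C else 0.
Proof.
move=> hx hy.
have E k : (r%:C * zeta ^+ k) ^+ x * ((r%:C * zeta ^+ k) ^+ y)^* =
    (r ^+ (x + y))%:C * (zeta ^+ (x + M.-1 * y)) ^+ k.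
  rewrite rmorphXn rmorphM /= Nconj_real conj_zetaX.
  rewrite !exprMn rmorphXn exprD -!exprM -mulrA -mulrA; congr (_ * _).
  rewrite mulrCA; congr (_ * _); rewrite -exprD; congr (_ ^+ _).
  rewrite mulnDl; congr (_ + _)%N; first by rewrite mulnC.
  by rewrite mulnAC mulnC.
under eq_bigr do rewrite E.
rewrite -mulr_sumr geo dvd_diag //; case: eqP => [<-|]; last by rewrite mulr0.
by rewrite rmorphM rmorph_nat mulrC addnn -mul2n.
Qed.

Definition zt (r : R) (t : {ffun 'I_d -> 'I_M}) : 'I_d -> R[i] :=
  fun j => r%:C * zeta ^+ (t j).

Lemma orth_grid (r : R) (a b : 'X_{1..d}) : a \in bs d M -> b \in bs d M ->
  \sum_(t : {ffun 'I_d -> 'I_M}) zpow (zt r t) a * (zpow (zt r t) b)^* =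
  if a == b then (\prod_(i < d) (M%:R * r ^+ (2 * a i)))%:C else 0.
Proof.
move=> /mem_bsP ha /mem_bsP hb.
pose F (i : 'I_d) (k : 'I_M) :=
  (r%:C * zeta ^+ k) ^+ a i * ((r%:C * zeta ^+ k) ^+ b i)^*.
transitivity (\sum_(t : {ffun 'I_d -> 'I_M}) \prod_(i < d) F i (t i)).
  by apply: eq_bigr => t _; rewrite /zpow rmorph_prod -big_split.
rewrite -bigA_distr_bigA /=.
transitivity (\prod_(i < d) (if a i == b i then (M%:R * r ^+ (2 * a i))%:C else 0)).
  apply: eq_bigr => i _; rewrite -(orth1 r (ha i) (hb i)).
  by [].
case: eqP => [<-|nab].
  by rewrite rmorph_prod; apply: eq_bigr => i _; rewrite eqxx.
case: (pickP (fun i => a i != b i)) => [i hi|h].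
  by rewrite (bigD1 i) //= (negbTE hi) mul0r.
by case: nab; apply/mnmP => i; move: (h i) => /negbFE /eqP.
Qed.

Lemma cabs_zt (r : R) t j : 0 <= r -> cabs (zt r t j) = r.
Proof.
move=> r0; apply: complexI; rewrite -normc_cabs /zt normrM normrX norm_zeta.
by rewrite expr1n mulr1 ger0_norm // ler0c.
Qed.

End Grid.

Lemma bernoulli_le (R : realFieldType) (e : R) n : 0 <= e -> e <= 1 ->
  1 - n%:R * e <= (1 - e) ^+ n.
Proof.
move=> e0 e1; elim: n => [|n IH]; first by rewrite mul0r subr0 expr0.
rewrite exprSr; apply: (le_trans _ (ler_wpM2r _ IH)); last by lra.
have : 0 <= n%:R * e * e by rewrite !mulr_ge0 ?ler0n.
rewrite -natr1; nra.
Qed.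

Lemma le_of_pow (R : realFieldType) (G K : R) N : 0 <= G ->
  (forall r, 0 < r -> r < 1 -> r ^+ N * G <= K) -> G <= K.
Proof.
move=> G0 h; rewrite leNgt; apply/negP => KG.
have K0 : 0 <= K.
  have h2 : (0 : R) < 2^-1 by rewrite invr_gt0 ltr0n.
  have h21 : (2^-1 : R) < 1 by rewrite invf_lt1 ?ltr1n ?ltr0n.
  apply: le_trans (h _ h2 h21); apply: mulr_ge0 => //; exact: exprn_ge0 (ltW h2).
have Gp : 0 < G by apply: le_lt_trans KG.
set t : R := N%:R; have t0 : 0 <= t by rewrite ler0n.
have t2 : 0 < t + 2 by lra.
set e := (G - K) / (G * (t + 2)).
have Gt : 0 < G * (t + 2) by rewrite mulr_gt0.
have e0 : 0 < e by rewrite divr_gt0 // subr_gt0.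
have e1 : e < 1.
  rewrite ltr_pdivrMr // mul1r; nra.
have := h (1 - e); rewrite subr_gt0 e1 ltrBlDr ltrDl e0 => /(_ erefl erefl) hr.
have hb := bernoulli_le N (ltW e0) (ltW e1); rewrite -/t in hb.
have : (1 - t * e) * G <= K.
  by apply: le_trans hr; rewrite ler_wpM2r // ltW.
have -> : (1 - t * e) * G = G - (G - K) * t / (t + 2).
  rewrite /e; field; rewrite ?gt_eqF //.
have : 0 < (G - K) * 2 / (t + 2) by rewrite divr_gt0 // mulr_gt0 // subr_gt0.
have -> : (G - K) * 2 / (t + 2) = G - (G - K) * t / (t + 2) - K.
  by field; rewrite gt_eqF.
lra.
Qed.

Lemma prim_root_ex (R : realType) n : (n > 0)%N -> exists z : R[i], n.-primitive_root z.
Proof.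
pose p : {poly R[i]} := 'X^n - 1; have [r Dp] := closed_field_poly_normal p.
move=> n_gt0; rewrite (monicP _) ?monicXnsubC // scale1r in Dp.
have rn1: all n.-unity_root r by apply/allP=> z; rewrite -root_prod_XsubC -Dp.
have sz_r: (n < (size r).+1)%N.
  by rewrite -(size_prod_XsubC r id) -Dp size_XnsubC.
have [|z] := hasP (has_prim_root n_gt0 rn1 _ sz_r); last by exists z.
by rewrite -separable_prod_XsubC -Dp separable_Xn_sub_1 // pnatr_eq0 -lt0n.
Qed.

Section Core.
Variables (R : realType) (H : lmodType R[i]) (ip : H -> H -> R[i]) (d : nat).
Hypothesis ipP : inner_product ip.
Variables (p : {mpoly R[i][d]}) (s0 : R).
Hypothesis hs : forall z : 'I_d -> R[i], (forall j, cabs (z j) < 1) ->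
  cabs (meval z p) <= s0.

Definition Dp := (\max_(m <- msupp p) mdeg m).+1.

Lemma Dp_gt0 : (0 < Dp)%N. Proof. by []. Qed.

Lemma msupp_lt m i : m \in msupp p -> (m i < Dp)%N.
Proof.
move=> hm; rewrite ltnS; apply: (@leq_trans (mdeg m)).
  by rewrite mdegE (bigD1 i) //= leq_addr.
exact: (@leq_bigmax_seq _ _ xpredT (fun m => mdeg m)).
Qed.

Local Notation Q y := (poly_shift (@Aid R H d) p y).
Local Notation hn := (hnorm2 ip).

Section WithY.
Variables (y : 'X_{1..d} -> H) (n : nat).
Hypothesis ysupp : forall b, b \notin bs d n -> y b = 0.
Let M := (n + Dp)%N.

Lemma bs_sub : {subset bs d n <= bs d M}.
Proof. by move=> a /mem_bsP h; apply/mem_bsP => i; rewrite /M; have := h i; lia. Qed.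

Lemma E_y (z : 'I_d -> R[i]) :
  \sum_(b <- bs d n) zpow z b *: y b = \sum_(a <- bs d M) zpow z a *: y a.
Proof.
symmetry; rewrite (@sum_reindex _ _ _ _ (bs d n) id) ?bs_uniq //.
all: rewrite ?(@map_id_in _ (fun x => x)) //.
- exact: bs_sub.
- by move=> a ha /ysupp ->; rewrite scaler0.
Qed.

Lemma E_Sh (z : 'I_d -> R[i]) m : m \in msupp p ->
  \sum_(a <- bs d M) zpow z a *: Sh m y a =
  zpow z m *: \sum_(a <- bs d M) zpow z a *: y a.
Proof.
move=> hm.
rewrite (@sum_reindex _ _ _ _ (bs d n) (fun b => b + m)%MM) ?bs_uniq //.
- rewrite -E_y scaler_sumr; apply: eq_bigr => b _.
  rewrite /Sh lem_addl addmK zpowD scalerA mulrC //.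
- exact: addIm.
- move=> a /mapP [b /mem_bsP hb ->]; apply/mem_bsP => i; rewrite mnmDE /M.
  have := hb i; have := msupp_lt i hm; lia.
- move=> a ha hna; rewrite /Sh; case: ifP => hma; last by rewrite scaler0.
  rewrite ysupp ?scaler0 //; apply: contra hna => hin.
  by apply/mapP; exists (a - m)%MM => //; rewrite submK.
Qed.

Lemma E_Q (z : 'I_d -> R[i]) :
  \sum_(a <- bs d M) zpow z a *: Q y a =
  meval z p *: \sum_(a <- bs d M) zpow z a *: y a.
Proof.
under eq_bigr do rewrite poly_shift_Sh scaler_sumr.
rewrite exchange_big /= mevalE scaler_suml big_seq [RHS]big_seq.
apply: eq_bigr => m hm.
rewrite -scalerA -E_Sh // scaler_sumr; apply: eq_bigr => a _.
by rewrite !scalerA mulrC.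
Qed.

Lemma Q_supp a : a \notin bs d M -> Q y a = 0.
Proof.
move=> ha; rewrite poly_shift_Sh big_seq big1 // => m hm.
rewrite /Sh; case: ifP => hma; last by rewrite scaler0.
rewrite ysupp ?scaler0 //; apply: contra ha => /mem_bsP hb.
apply/mem_bsP => i; move: (hb i) (msupp_lt i hm) (mnm_lepP hma i).
by rewrite mnmBE /M; lia.
Qed.

End WithY.
End Core.

Lemma prod_const_ord (R : comPzRingType) n (x : R) : \prod_(i < n) x = x ^+ n.
Proof. by rewrite prodr_const card_ord. Qed.

Section Core2.
Variables (R : realType) (H : lmodType R[i]) (ip : H -> H -> R[i]) (d : nat).
Hypothesis ipP : inner_product ip.
Variables (p : {mpoly R[i][d]}) (s0 : R).
Hypothesis hs : forall z : 'I_d -> R[i], (forall j, cabs (z j) < 1) ->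
  cabs (meval z p) <= s0.

Local Notation Q y := (poly_shift (@Aid R H d) p y).
Local Notation hn := (hnorm2 ip).

Lemma core (y : 'X_{1..d} -> H) (n : nat) :
  (forall b, b \notin bs d n -> y b = 0) ->
  \sum_(a <- bs d (n + Dp p)) hn (Q y a) <=
  s0 ^+ 2 * \sum_(a <- bs d (n + Dp p)) hn (y a).
Proof.
move=> ysupp; set M := (n + Dp p)%N.
have M0 : (0 < M)%N by rewrite /M addn_gt0 Dp_gt0 orbT.
apply: (@le_of_pow _ _ _ (2 * M * d)) => [|r r0 r1].
  by apply: sumr_ge0 => a _; exact: hnorm2_ge0.
have [zeta prim] := prim_root_ex R M0.
pose c (t : {ffun 'I_d -> 'I_M}) a := zpow (zt zeta r t) a.
pose w a := \prod_(i < d) (M%:R * r ^+ (2 * a i)).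
have orth : forall a b, a \in bs d M -> b \in bs d M ->
    \sum_t c t a * (c t b)^* = if a == b then (w a)%:C else 0.
  by move=> a b ha hb; exact: orth_grid.
have toR (v : 'X_{1..d} -> H) :
    \sum_t hn (\sum_(a <- bs d M) c t a *: v a) = \sum_(a <- bs d M) w a * hn (v a).
  have P := parseval ipP v (bs_uniq d M) orth.
  have e1 : \sum_t ip (\sum_(a <- bs d M) c t a *: v a) (\sum_(a <- bs d M) c t a *: v a)
      = (\sum_t hn (\sum_(a <- bs d M) c t a *: v a))%:C.
    by rewrite rmorph_sum; apply: eq_bigr => t _; rewrite ip_real.
  have e2 : \sum_(a <- bs d M) (w a)%:C * ip (v a) (v a) =
      (\sum_(a <- bs d M) w a * hn (v a))%:C.
    by rewrite rmorph_sum; apply: eq_bigr => a _; rewrite ip_real // rmorphM.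
  by apply: complexI; rewrite -e1 -e2.
have P1 := toR (fun a => Q y a); have P2 := toR y.
have hsq (t : {ffun 'I_d -> 'I_M}) : cabs (meval (zt zeta r t) p) ^+ 2 <= s0 ^+ 2.
  have h : cabs (meval (zt zeta r t) p) <= s0.
    by apply: hs => j; rewrite (cabs_zt prim) // ltW.
  apply: lerXn2r; rewrite ?nnegrE ?cabs_ge0 //.
  by apply: le_trans h; exact: cabs_ge0.
have EQ (t : {ffun 'I_d -> 'I_M}) :
    \sum_(a <- bs d M) c t a *: Q y a =
    meval (zt zeta r t) p *: \sum_(a <- bs d M) c t a *: y a.
  exact: (E_Q p ysupp (zt zeta r t)).
have key : \sum_(a <- bs d M) w a * hn (Q y a) <=
    s0 ^+ 2 * \sum_(a <- bs d M) w a * hn (y a).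
  rewrite -P1 -P2 mulr_sumr; apply: ler_sum => t _; rewrite EQ hnorm2Z //.
  by apply: ler_wpM2r; [exact: hnorm2_ge0 | exact: hsq].
have lo : (M%:R * r ^+ (2 * M)) ^+ d * \sum_(a <- bs d M) hn (Q y a) <=
    \sum_(a <- bs d M) w a * hn (Q y a).
  rewrite mulr_sumr big_seq [X in _ <= X]big_seq; apply: ler_sum => a ha.
  apply: ler_wpM2r; first exact: hnorm2_ge0.
  rewrite /w -prod_const_ord; apply: ler_prod => i _; apply/andP; split.
    by rewrite mulr_ge0 ?ler0n ?exprn_ge0 // ltW.
  apply: ler_wpM2l; first exact: ler0n.
  apply: ler_wiXn2l; rewrite ?ltW //; move/mem_bsP: ha => /(_ i); lia.
have hi : \sum_(a <- bs d M) w a * hn (y a) <=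
    M%:R ^+ d * \sum_(a <- bs d M) hn (y a).
  rewrite mulr_sumr big_seq [X in _ <= X]big_seq; apply: ler_sum => a ha.
  apply: ler_wpM2r; first exact: hnorm2_ge0.
  rewrite /w -prod_const_ord; apply: ler_prod => i _; apply/andP; split.
    by rewrite mulr_ge0 ?ler0n ?exprn_ge0 // ltW.
  by apply: ler_piMr; rewrite ?ler0n // exprn_ile1 // ltW.
have s00 : 0 <= s0 ^+ 2 by rewrite exprn_even_ge0.
have Md : 0 < (M%:R : R) ^+ d by rewrite exprn_gt0 // ltr0n.
have H1 := le_trans lo (le_trans key (ler_wpM2l s00 hi)).
rewrite exprMn -exprM in H1.
by rewrite -(ler_pM2l Md) mulrA [X in _ <= X]mulrCA.
Qed.
End Core2.

Lemma cabs0 (R : realType) : cabs (0 : R[i]) = 0.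
Proof. by apply: complexI; rewrite -normc_cabs normr0. Qed.

Lemma sup_fin (R : realType) d (p : {mpoly R[i][d]}) :
  exists s0 : R, polydisc_sup p = s0%:E /\
    (forall z, (forall j, cabs (z j) < 1) -> cabs (meval z p) <= s0).
Proof.
set b := \sum_(m <- msupp p) cabs p@_m.
have ub z : (forall j, cabs (z j) < 1) -> ((cabs (meval z p))%:E <= polydisc_sup p)%E.
  by move=> hz; apply: ereal_sup_ubound; exists z.
have bnd z : (forall j, cabs (z j) < 1) -> cabs (meval z p) <= b.
  move=> hz; rewrite -lecR -normc_cabs /b rmorph_sum mevalE.
  apply: le_trans (ler_norm_sum _ _ _) _; apply: ler_sum => m _.
  rewrite normrM normc_cabs; apply: ler_piMr; first by rewrite ler0c cabs_ge0.
  rewrite normr_prod; apply: prodr_ile1 => i _; rewrite normrX exprn_ge0 //=.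
  by rewrite exprn_ile1 // normc_cabs lecR ltW.
have Sle : (polydisc_sup p <= b%:E)%E.
  by apply: ge_ereal_sup => _ [z hz <-]; rewrite lee_fin; exact: bnd.
have Sge : (0%:E <= polydisc_sup p)%E.
  apply: le_trans (ub (fun _ => 0) _); first by rewrite lee_fin cabs_ge0.
  by move=> j; rewrite cabs0 ltr01.
move: Sle Sge ub; case: (polydisc_sup p) => [s _ _ ub| //| //].
exists s; split => // z hz; rewrite -lee_fin; exact: ub.
Qed.

Lemma main_shift (R : realType) (H : lmodType R[i]) (ip : H -> H -> R[i]) (d : nat)
  (ipP : inner_product ip) (p : {mpoly R[i][d]}) (s0 : R)
  (hs : forall z, (forall j, cabs (z j) < 1) -> cabs (meval z p) <= s0)
  (y : 'X_{1..d} -> H) :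
  (l2norm2 ip (poly_shift (@Aid R H d) p y) <= (s0 * s0)%:E * l2norm2 ip y)%E.
Proof.
rewrite {1}/l2norm2; apply: ge_ereal_sup => _ [F [finF _] <-].
set N := (\max_(a <- finmap.enum_fset (fset_set F)) mdeg a).+1.
have FN a : a \in finmap.enum_fset (fset_set F) -> a \in bs d N.
  move=> ha; apply/mem_bsP => i; rewrite ltnS; apply: (@leq_trans (mdeg a)).
    by rewrite mdegE (bigD1 i) //= leq_addr.
  exact: (@leq_bigmax_seq _ _ xpredT (fun m => mdeg m)).
pose y' := fun b => if b \in bs d N then y b else 0.
have y'supp b : b \notin bs d N -> y' b = 0 by rewrite /y' => /negbTE ->.
have QE a : a \in bs d N ->
    poly_shift (@Aid R H d) p y a = poly_shift (@Aid R H d) p y' a.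
  move=> /mem_bsP ha; rewrite !poly_shift_Sh; apply: eq_bigr => m _.
  rewrite /Sh; case: ifP => // hma; rewrite /y' ifT //.
  by apply/mem_bsP => i; rewrite mnmBE; have := ha i; lia.
rewrite (fsbig_finite _ _ finF) /= sumEFin.
apply: (@le_trans _ _ ((s0 * s0) * \sum_(a <- bs d N) hnorm2 ip (y a))%:E).
  rewrite lee_fin big_seq (eq_bigr (fun a => hnorm2 ip (poly_shift (@Aid R H d) p y' a)));
    last by move=> a /FN /QE ->.
  rewrite -big_seq.
  apply: le_trans (@sum_sub_le _ _ _ (bs d (N + Dp p)) _ _ _ _ _) _.
  - exact: finmap.fset_uniq.
  - exact: bs_uniq.
  - move=> a /FN /mem_bsP h; apply/mem_bsP => i; have := h i; lia.
  - by move=> a; exact: hnorm2_ge0.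
  apply: le_trans (core ipP hs y'supp) _; rewrite -expr2 ler_wpM2l ?exprn_even_ge0 //.
  rewrite le_eqVlt; apply/orP; left; apply/eqP.
  rewrite (@sum_reindex _ _ _ _ (bs d N) id) ?bs_uniq //.
  - by rewrite big_seq [RHS]big_seq; apply: eq_bigr => a ha; rewrite /y' ha.
  - by rewrite (@map_id_in _ (fun x => x)) // => a /mem_bsP h; apply/mem_bsP => i; have := h i; lia.
  - by move=> a _; rewrite (@map_id_in _ (fun x => x)) // => /y'supp ->; exact: hnorm20.
rewrite EFinM; apply: lee_wpmul2l; first by rewrite lee_fin -expr2 exprn_even_ge0.
apply: esum_ge; exists [set` bs d N]%classic; first by split => //; exact: finite_seq.
by rewrite -fsbig_seq ?bs_uniq // sumEFin.
Qed.

Unset Implicit Arguments.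

Theorem proposition3p3 (R : realType) (H : lmodType R[i])
  (ip : H -> H -> R[i]) (d : nat) (A : 'I_d -> mpoly.multinom d -> H -> H) :
  (0 < d)%N ->
  hilbert_space ip ->
  commuting_multishift ip A ->
  (forall (j : 'I_d) (a : mpoly.multinom d), unitary ip (A j a)) ->
  von_neumann_ineq ip A.
Proof.
move=> _ [ipP _] [_ Acomm] Aun p x _.
have [s0 [Es hs]] := sup_fin p.
have Bpr a := B_prop Acomm Aun (erefl (mdeg a)).
have Blin a c u v : B A a (c *: u + v) = c *: B A a u + B A a v.
  by case: (Bpr a) => h _ _; exact: h.
have Bip a u : ip (B A a u) (B A a u) = ip u u by case: (Bpr a).
have ex a : exists w, B A a w = x a by case: (Bpr a) => _ _; apply.
case: (boolp.choice ex) => y hy.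
have xW : x = W (B A) y by apply: funext => a; rewrite /W hy.
rewrite Es xW (poly_shift_W (Bstep Acomm) Blin) -EFinM.
have hnW v : l2norm2 ip (W (B A) v) = l2norm2 ip v.
  by rewrite /l2norm2; apply: eq_esum => a _; rewrite /hnorm2 /W Bip.
rewrite !hnW; exact: main_shift.
Qed.
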